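(* Let $(S,\Delta,\mathbb{P})$ be a probability space, $(U,d)$ a separable metric space, $\mathfrak{X}$ the set of $U$-valued random variables on $S$, $\mathcal{I}$ an ideal on $\mathbb{N}$ with $\mathbb{N}\notin\mathcal{I}$, and $\{X_n\}_{n\in\mathbb{N}}$ a sequence in $\mathfrak{X}$ which is $\mathcal{I}$-convergent in probability to $X_*\in\mathfrak{X}$ (i.e. $\{n:\mathbb{P}(d(X_n,X_* )>\varepsilon)>\delta\}\in\mathcal{I}$ for all $\varepsilon,\delta>0$). Then for every $r\geq 0$, $$\bar{\theta}_r(X_* )\subseteq \mathcal{I}^{\mathbb{P}}\text{-}LIM^rX_i\subseteq \bar{B}_r(X_* ),$$ where $\bar{\theta}_r(X_* )=\{Y\in\mathfrak{X}:\mathbb{P}(d(X_*,Y)\geq r)=0\}$ and $\bar{B}_r(X_* )=\{Y\in\mathfrak{X}:\rho(X_*,Y)\leq r\}$.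
   Context: The Ky Fan metric is $\rho(X,Y)=\inf\{\varepsilon>0:\mathbb{P}(d(X,Y)>\varepsilon)\leq\varepsilon\}$. An ideal on $\mathbb{N}$ is a family $\mathcal{I}\subseteq\mathcal{P}(\mathbb{N})$ with $\varnothing\in\mathcal{I}$, closed under finite unions and under subsets. A sequence $\{X_n\}$ in $\mathfrak{X}$ is rough $\mathcal{I}$-convergent in probability to $Y\in\mathfrak{X}$ with degree of roughness $r$ if $\{n\in\mathbb{N}:\mathbb{P}(d(X_n,Y)>r+\varepsilon)>\delta\}\in\mathcal{I}$ for every $\varepsilon,\delta>0$; $\mathcal{I}^{\mathbb{P}}\text{-}LIM^rX_i$ denotes the set of all such $Y$. *)

(* Defs.v *)
From HB Require Import structures.
From mathcomp Require Import all_boot all_order all_algebra.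
From mathcomp Require Import all_classical all_reals all_analysis.
Set Implicit Arguments. Unset Strict Implicit. Unset Printing Implicit Defensive.
Import Order.TTheory GRing.Theory Num.Theory.
Local Open Scope classical_set_scope.
Local Open Scope ring_scope.

Definition is_metric (R : realType) (U : Type) (d : U -> U -> R) : Prop :=
  [/\ (forall x y, 0 <= d x y),
      (forall x y, d x y = 0 <-> x = y),
      (forall x y, d x y = d y x) &
      (forall x y z, d x z <= d x y + d y z)].

Definition metric_open (R : realType) (U : Type) (d : U -> U -> R) (A : set U) : Prop :=
  forall x, A x -> exists2 e : R, 0 < e & [set y | d x y < e] `<=` A.

Definition metric_separable (R : realType) (U : Type) (d : U -> U -> R) : Prop :=
  exists D : set U, countable D /\
    forall x (e : R), 0 < e -> exists2 y, D y & d x y < e.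

Definition metric_borel (R : realType) (U : Type) (d : U -> U -> R) : set (set U) :=
  <<s metric_open d >>.

Definition random_var (dS : measure_display) (S : measurableType dS)
  (R : realType) (U : Type) (d : U -> U -> R) (X : S -> U) : Prop :=
  forall B, metric_borel d B -> measurable (X @^-1` B).

Definition is_ideal (I : set (set nat)) : Prop :=
  [/\ I set0,
      (forall A B, I A -> I B -> I (A `|` B)) &
      (forall A B, B `<=` A -> I A -> I B)].

Definition ky_fan (dS : measure_display) (S : measurableType dS) (R : realType)
  (P : probability S R) (U : Type) (d : U -> U -> R) (X Y : S -> U) : R :=
  inf [set e : R | 0 < e /\ (P [set s | (e < d (X s) (Y s))%R] <= e%:E)%E].

Definition I_conv_prob (dS : measure_display) (S : measurableType dS) (R : realType)
  (P : probability S R) (U : Type) (d : U -> U -> R) (I : set (set nat))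
  (Xn : nat -> S -> U) (Y : S -> U) : Prop :=
  forall eps delta : R, 0 < eps -> 0 < delta ->
    I [set n | (delta%:E < P [set s | (eps < d (Xn n s) (Y s))%R])%E].

Definition rough_I_conv_prob (dS : measure_display) (S : measurableType dS) (R : realType)
  (P : probability S R) (U : Type) (d : U -> U -> R) (I : set (set nat)) (r : R)
  (Xn : nat -> S -> U) (Y : S -> U) : Prop :=
  forall eps delta : R, 0 < eps -> 0 < delta ->
    I [set n | (delta%:E < P [set s | (r + eps < d (Xn n s) (Y s))%R])%E].

Definition rough_I_lim_set (dS : measure_display) (S : measurableType dS) (R : realType)
  (P : probability S R) (U : Type) (d : U -> U -> R) (I : set (set nat)) (r : R)
  (Xn : nat -> S -> U) : set (S -> U) :=
  [set Y | random_var d Y /\ rough_I_conv_prob P d I r Xn Y].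

Definition theta_bar (dS : measure_display) (S : measurableType dS) (R : realType)
  (P : probability S R) (U : Type) (d : U -> U -> R) (r : R) (X : S -> U) : set (S -> U) :=
  [set Y | random_var d Y /\ P [set s | r <= d (X s) (Y s)] = 0%E].

Definition ky_fan_closed_ball (dS : measure_display) (S : measurableType dS) (R : realType)
  (P : probability S R) (U : Type) (d : U -> U -> R) (r : R) (X : S -> U) : set (S -> U) :=
  [set Y | random_var d Y /\ ky_fan P d X Y <= r].

(* Main.v *)
Require Import Defs.
From HB Require Import structures.
From mathcomp Require Import all_boot all_order all_algebra.
From mathcomp Require Import all_classical all_reals all_analysis.
From mathcomp Require Import lra.
Import Order.TTheory GRing.Theory Num.Theory.
Local Open Scope classical_set_scope.
Local Open Scope ring_scope.

Section Aux.
Variables (R : realType) (U : Type) (d : U -> U -> R).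
Hypothesis hd : is_metric d.

Lemma open_lt z c : metric_open d [set u | d u z < c].
Proof.
case: hd => h0 h1 hs ht.
move=> x /= hx; exists (c - d x z); first by rewrite subr_gt0.
move=> y /= hy; have := ht y x z; rewrite (hs y x); lra.
Qed.

Lemma open_gt z c : metric_open d [set u | c < d u z].
Proof.
case: hd => h0 h1 hs ht.
move=> x /= hx; exists (d x z - c); first by rewrite subr_gt0.
move=> y /= hy; have := ht x y z; lra.
Qed.

Lemma pre_meas (dS : measure_display) (S : measurableType dS) (X : S -> U) B :
  random_var d X -> metric_open d B -> measurable (X @^-1` B).
Proof. by move=> hX hB; apply: hX; exact: sub_gen_smallest. Qed.

Lemma exists_n (g : R) : 0 < g -> exists n : nat, 2 * (n.+1%:R)^-1 < g.
Proof.
move=> g0.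
have h := @archi_boundP R (2 / g) ltac:(by apply: divr_ge0 => //; exact: ltW).
exists (Num.Def.archi_bound (2 / g)).
set m := Num.Def.archi_bound (2 / g) in h *.
have m0 : 0 < m.+1%:R :> R by rewrite ltr0n.
rewrite ltr_pdivrMr //.
have h2 : 2 / g < m.+1%:R.
  apply: (lt_le_trans h); rewrite ler_nat; exact: leqnSn.
by move: h2; rewrite ltr_pdivrMr // mulrC.
Qed.
End Aux.

Section Meas.
Variables (dS : measure_display) (S : measurableType dS) (R : realType) (U : Type)
  (d : U -> U -> R).
Hypothesis hd : is_metric d.
Hypothesis hsep : metric_separable d.
Variables (X Y : S -> U).
Hypotheses (hX : random_var d X) (hY : random_var d Y).

Lemma meas_gt a : measurable [set s | a < d (X s) (Y s)].
Proof.
case: hsep => D [cD hD].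
have e : [set s | a < d (X s) (Y s)] =
  \bigcup_(z : {x | D x}) \bigcup_n
    (X @^-1` [set u | d u (sval z) < (n.+1%:R)^-1] `&`
     Y @^-1` [set u | a + (n.+1%:R)^-1 < d u (sval z)]).
  case: hd => h0 h1 hs ht.
  apply/seteqP; split => s /=.
    move=> hs0.
    have [|n hn] := @exists_n R (d (X s) (Y s) - a); first by rewrite subr_gt0.
    have tp : 0 < (n.+1%:R)^-1 :> R by rewrite invr_gt0 ltr0n.
    have [z Dz hz] := hD (X s) _ tp.
    exists (exist _ z Dz) => //; exists n => //; split => /=; first by [].
    have := ht (X s) z (Y s); rewrite (hs z (Y s)); move=> H; move: hn hz H tp; rewrite /=; move: (n.+1%:R^-1) => t; lra.
  move=> [[z Dz] _ [n _ [/= h2 h3]]].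
  have := ht (Y s) (X s) z; rewrite (hs (Y s) (X s)); move=> H; move: h2 h3 H; rewrite /=; move: (n.+1%:R^-1) => t; lra.
rewrite e; apply: countable_bigcupT_measurable.
  apply/countable_injP; case/countable_injP: cD => f hf.
  exists (fun z : {x | D x} => f (sval z)) => z1 z2 _ _ h.
  apply: eq_sig_hprop; first by move=> ?; exact: Prop_irrelevance.
  by apply: hf; rewrite ?inE; [exact: (svalP z1)|exact: (svalP z2)|].
move=> z; apply: bigcupT_measurable => n; apply: measurableI.
  by apply: (@pre_meas _ _ d _ _) => //; exact: open_lt.
by apply: (@pre_meas _ _ d _ _) => //; exact: open_gt.
Qed.

Lemma meas_lt a : measurable [set s | d (X s) (Y s) < a].
Proof.
case: hsep => D [cD hD].
have e : [set s | d (X s) (Y s) < a] =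
  \bigcup_(z : {x | D x}) \bigcup_n
    (X @^-1` [set u | d u (sval z) < (n.+1%:R)^-1] `&`
     Y @^-1` [set u | d u (sval z) < a - (n.+1%:R)^-1]).
  case: hd => h0 h1 hs ht.
  apply/seteqP; split => s /=.
    move=> hs0.
    have [|n hn] := @exists_n R (a - d (X s) (Y s)); first by rewrite subr_gt0.
    have tp : 0 < (n.+1%:R)^-1 :> R by rewrite invr_gt0 ltr0n.
    have [z Dz hz] := hD (X s) _ tp.
    exists (exist _ z Dz) => //; exists n => //; split => /=; first by [].
    have := ht (Y s) (X s) z; rewrite (hs (Y s) (X s)); move=> H; move: hn hz H tp; rewrite /=; move: (n.+1%:R^-1) => t; lra.
  move=> [[z Dz] _ [n _ [/= h2 h3]]].
  have := ht (X s) z (Y s); rewrite (hs z (Y s)); move=> H; move: h2 h3 H; rewrite /=; move: (n.+1%:R^-1) => t; lra.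
rewrite e; apply: countable_bigcupT_measurable.
  apply/countable_injP; case/countable_injP: cD => f hf.
  exists (fun z : {x | D x} => f (sval z)) => z1 z2 _ _ h.
  apply: eq_sig_hprop; first by move=> ?; exact: Prop_irrelevance.
  by apply: hf; rewrite ?inE; [exact: (svalP z1)|exact: (svalP z2)|].
move=> z; apply: bigcupT_measurable => n; apply: measurableI.
  by apply: (@pre_meas _ _ d _ _) => //; exact: open_lt.
by apply: (@pre_meas _ _ d _ _) => //; exact: open_lt.
Qed.

Lemma meas_ge a : measurable [set s | a <= d (X s) (Y s)].
Proof.
have -> : [set s | a <= d (X s) (Y s)] = ~` [set s | d (X s) (Y s) < a].
  apply/seteqP; split => s /= H.
    by apply/negP; rewrite -leNgt.
  by move/negP: H; rewrite -leNgt.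
exact/measurableC/meas_lt.
Qed.
End Meas.
Theorem theorem2p3 (dS : measure_display) (S : measurableType dS) (R : realType)
  (P : probability S R) (U : Type) (d : U -> U -> R)
  (hd : is_metric d) (hsep : metric_separable d)
  (I : set (set nat)) (hI : is_ideal I) (hIN : ~ I setT)
  (Xn : nat -> S -> U) (Xs : S -> U)
  (hXn : forall n, random_var d (Xn n)) (hXs : random_var d Xs)
  (hconv : I_conv_prob P d I Xn Xs) :
  forall r : R, 0 <= r ->
    theta_bar P d r Xs `<=` rough_I_lim_set P d I r Xn /\
    rough_I_lim_set P d I r Xn `<=` ky_fan_closed_ball P d r Xs.
Proof.
move=> r r0; case: (hd) => h0 h1 hs ht; case: (hI) => I0 IU Isub.
have mg := fun X Y hX hY a => @meas_gt dS S R U d hd hsep X Y hX hY a.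
have mge := fun X Y hX hY a => @meas_ge dS S R U d hd hsep X Y hX hY a.
split.
- move=> Y [hY hP]; split => // eps delta e0 d0.
  apply: (fun sub => Isub _ _ sub (hconv _ _ e0 d0)) => n /= hn.
  apply: (lt_le_trans hn).
  have sub : [set s | r + eps < d (Xn n s) (Y s)] `<=`
     [set s | r <= d (Xs s) (Y s)] `|` [set s | eps < d (Xn n s) (Xs s)].
    move=> s /= H; have := ht (Xn n s) (Xs s) (Y s).
    case: (leP r (d (Xs s) (Y s))) => h; [by left|right; lra].
  apply: (le_trans (le_measure _ _ _ sub)); rewrite ?inE.
  + exact: mg.
  + by apply: measurableU; [exact: mge|exact: mg].
  apply: (le_trans (measureU2 _ _ _)); [exact: mge|exact: mg|].
  have hP' : P [set s | r <= d (Xs s) (Y s)] = 0%E := hP.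
  by rewrite [X in (X + _)%E](_ : _ = 0%E) ?add0e //; exact: hP.
- move=> Y [hY hconvY]; split => //; rewrite /ky_fan.
  set E := [set e : R | _].
  have hE : forall e, r < e -> E e.
    move=> e re; split; first lra.
    have ep : 0 < (e - r) / 2 by lra.
    have e2 : 0 < e / 2 by lra.
    have hA := hconvY _ _ ep e2.
    have hB := hconv _ _ ep e2.
    have hU := IU _ _ hA hB.
    have [n hn] : exists n, ~ (([set n | (((e / 2)%R)%:E < P [set s | (r + (e - r) / 2 < d (Xn n s) (Y s))%R])%E]
        `|` [set n | (((e / 2)%R)%:E < P [set s | ((e - r) / 2 < d (Xn n s) (Xs s))%R])%E]) n).
      apply: contrapT => H; apply: hIN; apply: (fun sub => Isub _ _ sub hU) => n _.
      by apply: contrapT => Hn; apply: H; exists n.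
    have hn1 : ~ (((e / 2)%R)%:E < P [set s | (r + (e - r) / 2 < d (Xn n s) (Y s))%R])%E.
      by move=> h; apply: hn; left.
    have hn2 : ~ (((e / 2)%R)%:E < P [set s | ((e - r) / 2 < d (Xn n s) (Xs s))%R])%E.
      by move=> h; apply: hn; right.
    move/negP: hn1; rewrite -leNgt => hn1.
    move/negP: hn2; rewrite -leNgt => hn2.
    have sub : [set s | e < d (Xs s) (Y s)] `<=`
      [set s | r + (e - r) / 2 < d (Xn n s) (Y s)] `|`
      [set s | (e - r) / 2 < d (Xn n s) (Xs s)].
      move=> s /= H; have := ht (Xs s) (Xn n s) (Y s); rewrite (hs (Xs s) (Xn n s)).
      case: (ltP (r + (e - r) / 2) (d (Xn n s) (Y s))) => h; [by left|right; lra].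
    apply: (le_trans (le_measure _ _ _ sub)); rewrite ?inE.
    + exact: mg.
    + by apply: measurableU; exact: mg.
    apply: (le_trans (measureU2 _ _ _)); [exact: mg|exact: mg|].
    apply: (le_trans (leeD hn1 hn2)).
    by rewrite -EFinD lee_fin; lra.
  have hlb : has_lbound E by exists 0 => x [/ltW].
  rewrite leNgt; apply/negP => H.
  have : E ((r + inf E) / 2) by apply: hE; lra.
  move/(ge_inf hlb); lra.
Qed.
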